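(* Let $L,M,N$ be positive integers. For $n=1,\dots,N$ let $\bm{s}_n\in\mathbb{C}^L$, $\overline{\bm{h}}_n\in\mathbb{C}^M$, $\bm{R}_n\in\mathbb{C}^{M\times M}$, and set $g_n=\frac{1}{M}\operatorname{tr}(\bm{R}_n)$. Let $\bm{a}^\circ\in\{0,1\}^N$. Define $$\mathcal{N}_{\mathrm{I}}=\Big\{\bm{x}\in\mathbb{R}^N:\ \sum_{n=1}^N x_n\bm{R}_n\otimes(\bm{s}_n\bm{s}_n^H)=\bm{0}\ \text{and}\ \sum_{n=1}^N x_n\overline{\bm{h}}_n\otimes\bm{s}_n=\bm{0}\Big\},$$ $$\mathcal{N}_{\mathrm{II}}=\Big\{\bm{x}\in\mathbb{R}^N:\ \sum_{n=1}^N x_n g_n\bm{I}_M\otimes(\bm{s}_n\bm{s}_n^H)=\bm{0}\ \text{and}\ \sum_{n=1}^N x_n\overline{\bm{h}}_n\otimes\bm{s}_n=\bm{0}\Big\},$$ $$\mathcal{C}=\{\bm{x}\in\mathbb{R}^N:\ x_n\ge 0\text{ if }a^\circ_n=0,\ x_n\le 0\text{ if }a^\circ_n=1\}.$$ If $\mathcal{N}_{\mathrm{II}}\cap\mathcal{C}=\{\bm{0}\}$, then $\mathcal{N}_{\mathrm{I}}\cap\mathcal{C}=\{\bm{0}\}$.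
   Context: $\otimes$ is the Kronecker product. In the paper, $\bm{R}_n$ is the channel correlation matrix of device $n$ (correlated case) and $g_n\bm{I}_M$ its uncorrelated counterpart; $\bm{a}^\circ$ is the true activity vector. *)

(* Defs.v *)
From HB Require Import structures.
From mathcomp Require Import all_boot all_order all_algebra.
From mathcomp Require Import complex mxtens.
Set Implicit Arguments. Unset Strict Implicit. Unset Printing Implicit Defensive.
Import Order.TTheory GRing.Theory Num.Theory.
Local Open Scope ring_scope.
Local Open Scope complex_scope.

Definition hermmx (R : rcfType) m n (A : 'M[R[i]]_(m, n)) : 'M[R[i]]_(n, m) :=
  (map_mx (@conjc R) A)^T.

Definition gfac (R : rcfType) (M : nat) (Rn : 'M[R[i]]_M) : R[i] :=
  \tr Rn / M%:R.

Definition NullI (R : rcfType) (L M N : nat)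
  (s : 'I_N -> 'cV[R[i]]_L) (hbar : 'I_N -> 'cV[R[i]]_M)
  (Rm : 'I_N -> 'M[R[i]]_M) (x : 'I_N -> R) : Prop :=
  \sum_(n < N) ((x n)%:C *: (Rm n *t (s n *m hermmx (s n)))) = 0 /\
  \sum_(n < N) ((x n)%:C *: (hbar n *t s n)) = 0.

Definition NullII (R : rcfType) (L M N : nat)
  (s : 'I_N -> 'cV[R[i]]_L) (hbar : 'I_N -> 'cV[R[i]]_M)
  (Rm : 'I_N -> 'M[R[i]]_M) (x : 'I_N -> R) : Prop :=
  \sum_(n < N) ((x n)%:C *: (((gfac (Rm n))%:M : 'M[R[i]]_M) *t (s n *m hermmx (s n)))) = 0 /\
  \sum_(n < N) ((x n)%:C *: (hbar n *t s n)) = 0.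

Definition ConeC (R : rcfType) (N : nat) (a : 'I_N -> bool) (x : 'I_N -> R) : Prop :=
  forall n : 'I_N, (~~ a n -> 0 <= x n) /\ (a n -> x n <= 0).

(* Main.v *)
Require Import Defs.
From HB Require Import structures.
From mathcomp Require Import all_boot all_order all_algebra.
From mathcomp Require Import complex mxtens ring.
Import Order.TTheory GRing.Theory Num.Theory.
Local Open Scope ring_scope.
Local Open Scope complex_scope.

Lemma nullI_II (R : rcfType) (L M N : nat)
  (s : 'I_N -> 'cV[R[i]]_L) (hbar : 'I_N -> 'cV[R[i]]_M)
  (Rm : 'I_N -> 'M[R[i]]_M) (x : 'I_N -> R) :
  NullI s hbar Rm x -> NullII s hbar Rm x.
Proof.
move=> [H1 H2]; split => //.
set P := fun n => s n *m hermmx (s n).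
have E : forall i k l, \sum_(n < N) (x n)%:C * (Rm n i i * P n k l) = 0.
  move=> i k l.
  have := congr1 (fun A : 'M[R[i]]_(M * L) => A (mxtens_index (i, k)) (mxtens_index (i, l))) H1.
  rewrite /= summxE !mxE => h; rewrite -[X in _ = X]h.
  apply: eq_bigr => n _.
  by rewrite [in RHS]mxE tensmxE.
apply/matrixP => u v.
case: (mxtens_indexP u) => i k; case: (mxtens_indexP v) => j l.
rewrite summxE mxE.
under eq_bigr => n _ do rewrite mxE tensmxE mxE.
have [eij|nij] := eqVneq i j; last first.
  by apply: big1 => n _; rewrite mulr0n mul0r mulr0.
subst j.
rewrite (eq_bigr (fun n => (M%:R)^-1 * \sum_(i' < M) ((x n)%:C * (Rm n i' i' * P n k l)))); last first.
  move=> n _; rewrite mulr1n /gfac /mxtrace -big_distrr -big_distrl /= /P; ring.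
rewrite -mulr_sumr exchange_big big1 ?mulr0 // => i' _; exact: E.
Qed.

Theorem theorem3 (R : rcfType) (L M N : nat) (hL : (0 < L)%N) (hM : (0 < M)%N)
  (hN : (0 < N)%N)
  (s : 'I_N -> 'cV[R[i]]_L) (hbar : 'I_N -> 'cV[R[i]]_M)
  (Rm : 'I_N -> 'M[R[i]]_M) (a : 'I_N -> bool) :
  (forall x : 'I_N -> R, NullII s hbar Rm x /\ ConeC a x <-> x = (fun _ => 0)) ->
  (forall x : 'I_N -> R, NullI s hbar Rm x /\ ConeC a x <-> x = (fun _ => 0)).
Proof.
move=> H x; split.
  by move=> [h1 h2]; apply/H; split => //; apply: nullI_II.
move=> ->; split; last by move=> n; split => _.
by split; apply: big1 => n _; rewrite scale0r.
Qed.
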